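(* Let $K$ be an arbitrary field, let $V_1,\dots,V_m$ and $V$ be $K$-vector spaces, and let $f\colon \prod_{i=1}^m V_i\to V$ be a multilinear map (linear in each argument separately). If $\operatorname{Im} f$ contains two vectors that are not proportional, then $\operatorname{Im} f$ contains a $2$-dimensional linear subspace of $V$. In particular, if $\dim V=2$ then $\operatorname{Im} f=V$. *)

(* Defs.v *)
From HB Require Import structures.
From mathcomp Require Import all_boot all_order all_algebra.
Set Implicit Arguments. Unset Strict Implicit. Unset Printing Implicit Defensive.
Import GRing.Theory.
Local Open Scope ring_scope.

Definition multilinear (K : fieldType) (m : nat) (Vs : 'I_m -> lmodType K)
    (V : lmodType K) (f : (forall i, Vs i) -> V) : Prop :=
  forall (x : forall i, Vs i) (i : 'I_m) (a : K) (u v : Vs i),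
    f (dfwith x (a *: u + v)) = a *: f (dfwith x u) + f (dfwith x v).

Definition in_image (K : fieldType) (m : nat) (Vs : 'I_m -> lmodType K)
    (V : lmodType K) (f : (forall i, Vs i) -> V) (v : V) : Prop :=
  exists x, f x = v.

Definition proportional (K : fieldType) (V : lmodType K) (u w : V) : Prop :=
  (exists a : K, u = a *: w) \/ (exists a : K, w = a *: u).

Definition lin_indep2 (K : fieldType) (V : lmodType K) (u w : V) : Prop :=
  forall a b : K, a *: u + b *: w = 0 -> a = 0 /\ b = 0.

Definition contains_2dim_subspace (K : fieldType) (m : nat)
    (Vs : 'I_m -> lmodType K) (V : lmodType K) (f : (forall i, Vs i) -> V)
    : Prop :=
  exists u w : V, lin_indep2 u w /\
    forall a b : K, in_image f (a *: u + b *: w).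

(* Main.v *)
Require Import Defs.
From HB Require Import structures.
From mathcomp Require Import all_boot all_order all_algebra.
From Stdlib Require Import Classical FunctionalExtensionality.
Set Implicit Arguments. Unset Strict Implicit.
Import GRing.Theory.
Local Open Scope ring_scope.

Section Aux.
Variables (K : fieldType) (V : lmodType K).

Lemma nonprop_indep (u w : V) : ~ proportional u w -> lin_indep2 u w.
Proof.
move=> np a b H; case: (eqVneq a 0) => [a0|a0].
  subst; move: H; rewrite scale0r add0r => H; split=> //.
  case: (eqVneq b 0) => // b0; exfalso; apply: np; right; exists 0.
  by rewrite -(scalerK b0 w) H scaler0 scale0r.
exfalso; apply: np; left; exists (- (b / a)).
rewrite -(scalerK a0 u); move/eqP: H; rewrite addr_eq0 => /eqP ->.
by rewrite scalerN scalerA mulrC scaleNr.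
Qed.

Lemma prop_aux (a c : V) : proportional a c -> c != 0 -> exists al : K, a = al *: c.
Proof.
case=> [[s ->] _|[s Hs] c0]; first by exists s.
have s0 : s != 0 by apply: contraNneq c0 => s0; rewrite Hs s0 scale0r.
by exists s^-1; rewrite Hs scalerK.
Qed.

Lemma prop_zero (a b c : V) : proportional a c -> proportional b c ->
  ~ proportional a b -> c = 0.
Proof.
move=> pa pb np; case: (eqVneq c 0) => // c0; exfalso.
have [al ha] := prop_aux pa c0; have [be hb] := prop_aux pb c0.
apply: np; case: (eqVneq al 0) => [al0|al0].
  by left; exists 0; rewrite ha al0 !scale0r.
by right; exists (be / al); rewrite hb ha scalerA divfK.
Qed.
End Aux.

Section Main.
Variables (K : fieldType) (m : nat) (Vs : 'I_m -> lmodType K) (V : lmodType K)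
  (f : (forall i, Vs i) -> V) (hf : multilinear f).

Lemma dfwith_id (x : forall i, Vs i) i : dfwith x (x i) = x.
Proof. by apply: functional_extensionality_dep => j; case: dfwithP. Qed.

Lemma f_dfwith0 z i : f (dfwith z (0 : Vs i)) = 0.
Proof.
have := hf z (i:=i) 1 0 0; rewrite scaler0 addr0 scale1r => H.
by apply: (addrI (f (dfwith z (0 : Vs i)))); rewrite addr0 -H.
Qed.

Lemma f_lin z i a b (s t : Vs i) :
  f (dfwith z (a *: s + b *: t)) = a *: f (dfwith z s) + b *: f (dfwith z t).
Proof.
rewrite hf; congr (_ + _); have := hf z (i:=i) b t 0.
by rewrite addr0 => ->; rewrite f_dfwith0 addr0.
Qed.

Lemma line z i (s t : Vs i) :
  ~ proportional (f (dfwith z s)) (f (dfwith z t)) -> contains_2dim_subspace f.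
Proof.
move=> np; exists (f (dfwith z s)), (f (dfwith z t)); split.
  exact: nonprop_indep.
by move=> a b; exists (dfwith z (a *: s + b *: t)); exact: f_lin.
Qed.

Lemma main (d : nat) : forall (x y : forall i, Vs i), (#|[set j | x j != y j]| <= d)%N ->
  ~ proportional (f x) (f y) -> contains_2dim_subspace f.
Proof.
elim: d => [|d IH] x y.
  rewrite leqn0 cards_eq0 => /eqP H np.
  have xy : x = y.
    apply: functional_extensionality_dep => j; apply/eqP.
    have : j \notin [set j | x j != y j] by rewrite H inE.
    by rewrite inE negbK.
  by exfalso; subst; apply: np; left; exists 1; rewrite scale1r.
set D := [set j | x j != y j] => Hc np.
case: (leqP #|D| d) => [le|gt]; first exact: (IH x y le np).
have [i Di] : exists i, i \in D.
  by apply/card_gt0P; apply: leq_ltn_trans gt.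
have cD : (#|D :\ i| <= d)%N by move: Hc; rewrite (cardsD1 i D) Di.
have IH' : forall z1 z2, (forall j, z1 j != z2 j -> (j != i) && (x j != y j)) ->
    ~ proportional (f z1) (f z2) -> contains_2dim_subspace f.
  move=> z1 z2 hz; apply: IH; apply: leq_trans cD; apply: subset_leq_card.
  by apply/subsetP => j; rewrite !inE => /hz.
have Fx : f x = 0 -> False.
  by move=> fx; apply: np; left; exists 0; rewrite fx scale0r.
set xi := dfwith x (y i); set yi := dfwith y (x i).
have [P1|nP] := classic (proportional (f x) (f xi)); last first.
  apply: (line (z:=x) (s:=x i) (t:=y i)); by rewrite dfwith_id.
have [P2|nP] := classic (proportional (f y) (f xi)); last first.
  apply: (IH' y xi) => // j.
  rewrite /xi; case: (eqVneq i j) => [<-|ij]; first by rewrite dfwith_in eqxx.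
  by rewrite dfwith_out // => h; rewrite eq_sym.
have fxi := prop_zero P1 P2 np.
have [Q1|nP] := classic (proportional (f y) (f yi)); last first.
  apply: (line (z:=y) (s:=y i) (t:=x i)); by rewrite dfwith_id.
have [Q2|nP] := classic (proportional (f x) (f yi)); last first.
  apply: (IH' x yi) => // j.
  rewrite /yi; case: (eqVneq i j) => [<-|ij]; first by rewrite dfwith_in eqxx.
  by rewrite dfwith_out.
have fyi := prop_zero Q2 Q1 np.
have fq := hf x 1 (x i) (y i); rewrite !scale1r dfwith_id -/xi fxi addr0 in fq.
have fr := hf y 1 (y i) (x i); rewrite !scale1r dfwith_id -/yi fyi addr0 in fr.
apply: (IH' (dfwith x (x i + y i)) (dfwith y (y i + x i))); last by rewrite fq fr.
move=> j; case: (eqVneq i j) => [<-|ij]; first by rewrite !dfwith_in addrC eqxx.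
by rewrite !dfwith_out.
Qed.
End Main.

Lemma part1 (K : fieldType) (m : nat) (Vs : 'I_m -> lmodType K)
      (V : lmodType K) (f : (forall i, Vs i) -> V) :
    multilinear f ->
    (exists v w : V, in_image f v /\ in_image f w /\ ~ proportional v w) ->
    contains_2dim_subspace f.
Proof.
move=> hf [v [w [[x fx] [[y fy] np]]]].
apply: (@main _ _ _ _ f hf _ x y (leqnn _)); by rewrite fx fy.
Qed.

Theorem lemma1p31 :
  (forall (K : fieldType) (m : nat) (Vs : 'I_m -> lmodType K)
      (V : lmodType K) (f : (forall i, Vs i) -> V),
    multilinear f ->
    (exists v w : V, in_image f v /\ in_image f w /\ ~ proportional v w) ->
    contains_2dim_subspace f)
  /\
  (forall (K : fieldType) (m : nat) (Vs : 'I_m -> lmodType K)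
      (V : vectType K) (f : (forall i, Vs i) -> V),
    multilinear f ->
    (exists v w : V, in_image f v /\ in_image f w /\ ~ proportional v w) ->
    \dim (fullv : {vspace V}) = 2%N ->
    forall v : V, in_image f v).
Proof.
split; first exact: part1.
move=> K m Vs V f hf ex hdim v.
have [u [w [ind img]]] := part1 hf ex.
have w0 : w != 0.
  apply/eqP => w0; have [] := ind 0 1; first by rewrite w0 scaler0 scale0r addr0.
  by move=> _ /eqP; rewrite oner_eq0.
have uw : u \notin <[w]>%VS.
  apply/negP => /vlineP [k hk]; have [] := ind 1 (- k).
    by rewrite hk scale1r scaleNr subrr.
  by move=> /eqP; rewrite oner_eq0.
have fr : free [:: u; w] by rewrite free_cons span_seq1 uw seq1_free w0.
have full : <<[:: u; w]>>%VS = fullv.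
  apply/eqP; rewrite eqEdim subvf /= hdim; by move/eqP: fr => ->.
have : v \in <<[:: u; w]>>%VS by rewrite full memvf.
rewrite span_cons span_seq1 => /memv_addP [a /vlineP [ka ->] [b /vlineP [kb ->] ->]].
exact: img.
Qed.
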